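(* Let $G=(X,E)$ be a finite connected graph with $n=|X|$, $W:X\to\mathbb{R}$, and let $w_1\ge w_2\ge\dots\ge w_n$ be the values of $W$ listed with multiplicity in decreasing order. For each real $Q$ let $\lambda_1\le\dots\le\lambda_n$ be the eigenvalues of $H=\Delta-QW$ and $\psi_1,\dots,\psi_n$ a corresponding orthonormal basis of eigenvectors (any choice). Then for every $i$ and every vertex $v$ with $W(v)\neq w_i$, $\psi_i(v)\to0$ as $Q\to\infty$.
   Context: $\Delta$ is the symmetrized Laplacian: $\Delta(v,v)=1$, $\Delta(v,w)=-1/\sqrt{d_vd_w}$ if $vw\in E$ ($d_v$ the degree), $0$ otherwise; $W$ is identified with the diagonal matrix $\mathrm{diag}(W(v))$. *)

(* Defs.v *)
From HB Require Import structures.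
From mathcomp Require Import all_boot all_order all_algebra.
From mathcomp Require Import all_classical all_reals all_analysis.
Set Implicit Arguments. Unset Strict Implicit. Unset Printing Implicit Defensive.
Import Order.TTheory GRing.Theory Num.Theory.
Local Open Scope ring_scope.

Definition simple_graph (n : nat) (e : rel 'I_n) : Prop :=
  irreflexive e /\ symmetric e.

Definition connected_graph (n : nat) (e : rel 'I_n) : Prop :=
  forall u v : 'I_n, connect e u v.

Definition deg (n : nat) (e : rel 'I_n) (v : 'I_n) : nat := #|[set w | e v w]|.

Definition sLaplacian (R : rcfType) (n : nat) (e : rel 'I_n) : 'M[R]_n :=
  \matrix_(i, j)
    (if i == j then 1
     else if e i j then - (Num.sqrt ((deg e i)%:R * (deg e j)%:R))^-1
     else 0).

Definition diagW (R : pzRingType) (n : nat) (W : 'I_n -> R) : 'M[R]_n :=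
  \matrix_(i, j) (W i *+ (i == j)).

Definition Hop (R : rcfType) (n : nat) (e : rel 'I_n) (W : 'I_n -> R) (Q : R)
  : 'M[R]_n := sLaplacian R e - Q *: diagW W.

(* w_1 >= ... >= w_n : values of W with multiplicity, decreasing; index i is 0-based *)
Definition wsorted (R : realDomainType) (n : nat) (W : 'I_n -> R) (i : 'I_n) : R :=
  nth 0 (sort (fun x y : R => y <= x) [seq W v | v <- enum 'I_n]) i.

(* P has orthonormal columns which are eigenvectors of H with eigenvalues lam,
   listed in nondecreasing order: column i of P is psi_(i+1). *)
Definition ordered_orthonormal_eigenbasis (R : rcfType) (n : nat)
  (H : 'M[R]_n) (lam : 'I_n -> R) (P : 'M[R]_n) : Prop :=
  [/\ P^T *m P = 1%:M,
      forall i : 'I_n, H *m col i P = lam i *: col i P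
    & forall i j : 'I_n, (i <= j)%N -> lam i <= lam j].

(* Main.v *)
Require Import Defs.
From HB Require Import structures.
From mathcomp Require Import all_boot all_order all_algebra.
From mathcomp Require Import all_classical all_reals all_analysis.
From mathcomp Require Import ring lra.
Import Order.TTheory GRing.Theory Num.Theory numFieldNormedType.Exports.
Local Open Scope classical_set_scope.
Local Open Scope ring_scope.

Lemma L_eq (R : realType) n (D : 'M[R]_n) (W : 'I_n -> R) (Q : R) (l : R)
  (P : 'M[R]_n) k :
  (D - Q *: diagW W) *m col k P = l *: col k P ->
  forall v, (l + Q * W v) * P v k = \sum_j D v j * P j k.
Proof.
move=> H v; move/matrixP: H => /(_ v ord0).
rewrite !mxE => E.
rewrite mulrDl -{}E.
rewrite (eq_bigr (fun j => D v j * P j k - Q * (W v *+ (v == j)) * P j k)); last first.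
  by move=> j _; rewrite !mxE mulrBl.
rewrite sumrB.
have -> : \sum_j Q * (W v *+ (v == j)) * P j k = Q * W v * P v k.
  rewrite (bigD1 v) //= eqxx mulr1n big1 ?addr0 // => j /negbTE.
  by rewrite eq_sym => ->; rewrite mulr0n mulr0 mul0r.
by rewrite subrK.
Qed.

Lemma L_col1 (R : realType) n (P : 'M[R]_n) : P^T *m P = 1%:M ->
  forall k, \sum_v P v k ^+ 2 = 1.
Proof.
move=> H k; have := congr1 (fun M : 'M[R]_n => M k k) H => /=.
rewrite !mxE eqxx mulr1n => <-; apply: eq_bigr => v _; by rewrite mxE expr2.
Qed.

Lemma L_row1 (R : realType) n (P : 'M[R]_n) : P^T *m P = 1%:M ->
  forall v, \sum_k P v k ^+ 2 = 1.
Proof.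
move=> /mulmx1C H v; have := congr1 (fun M : 'M[R]_n => M v v) H => /=.
rewrite !mxE eqxx mulr1n => <-; apply: eq_bigr => k _; by rewrite mxE expr2.
Qed.

Lemma L_le1 (R : realType) n (P : 'M[R]_n) : P^T *m P = 1%:M ->
  forall v k, `|P v k| <= 1.
Proof.
move=> H v k; have := @L_col1 _ _ P H k; rewrite (bigD1 v) //= => E.
have : 0 <= \sum_(j | j != v) P j k ^+ 2 by apply: sumr_ge0 => j _; exact: sqr_ge0.
have := normr_ge0 (P v k); have : `|P v k| ^+ 2 = P v k ^+ 2 by rewrite real_normK ?num_real.
move=> E2 h0 hs.
have h1 : `|P v k| ^+ 2 <= 1 by lra.
rewrite -(expr_le1 (n:=2)) //.
Qed.

Lemma aux1 (R : realType) (x p C N : R) : 0 <= x -> 0 <= p -> 0 <= C -> 1 <= N ->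
  x * p <= C -> 1 <= N * p ^+ 2 -> x <= N * C.
Proof.
move=> hx hp hC hN h1 h2.
have h3 : (x * p) ^+ 2 <= C ^+ 2 by rewrite ler_sqr ?nnegrE ?mulr_ge0.
have h4 : x ^+ 2 <= (N * C) ^+ 2.
  have : x ^+ 2 <= N * (x * p) ^+ 2 by nra.
  nra.
by rewrite -ler_sqr ?nnegrE ?mulr_ge0 //; lra.
Qed.

Lemma L_bound (R : realType) n (D : 'M[R]_n) (W : 'I_n -> R) (Q : R)
  (lam : 'I_n -> R) (P : 'M[R]_n) (C : R) :
  P^T *m P = 1%:M ->
  (forall k, (D - Q *: diagW W) *m col k P = lam k *: col k P) ->
  (forall v, \sum_j `|D v j| <= C) ->
  forall k v, `|lam k + Q * W v| * `|P v k| <= C.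
Proof.
move=> HP He HC k v; rewrite -normrM (@L_eq _ _ _ _ _ _ _ _ (He k)).
apply: le_trans (ler_norm_sum _ _ _) _; apply: le_trans (HC v).
apply: ler_sum => j _; rewrite normrM -[X in _ <= X]mulr1 ler_wpM2l //.
exact: (@L_le1 _ _ P).
Qed.

Lemma intcl (R : realType) (a b : nat) : `|a%:R - b%:R : R| < 1 -> a = b.
Proof.
move=> h; apply/eqP; rewrite eqn_leq; apply/andP; split; rewrite leqNgt; apply/negP=> lt.
- have : (b.+1%:R <= a%:R :> R) by rewrite ler_nat.
  rewrite -natr1; move: h; rewrite ltr_norml => /andP[h1 h2]; lra.
- have : (a.+1%:R <= b%:R :> R) by rewrite ler_nat.
  rewrite -natr1; move: h; rewrite ltr_norml => /andP[h1 h2]; lra.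
Qed.

Lemma main (R : realType) n (D : 'M[R]_n) (W : 'I_n -> R) (Q : R)
  (lam : 'I_n -> R) (P : 'M[R]_n) (C g : R) :
  P^T *m P = 1%:M ->
  (forall k, (D - Q *: diagW W) *m col k P = lam k *: col k P) ->
  (forall k k' : 'I_n, (k <= k')%N -> lam k <= lam k') ->
  (forall v, \sum_j `|D v j| <= C) -> 0 <= C ->
  (forall v v', W v != W v' -> g <= `|W v - W v'|) ->
  0 <= Q -> 3%:R * n%:R * C + 1 <= Q * g ->
  forall i v, W v != wsorted W i -> `|P v i| <= C / (Q * g - n%:R * C).
Proof.
move=> HP He Hmono HC C0 Hg Q0 HQ i v Hv.
have n1 : (0 < n)%N by apply: (leq_ltn_trans _ (ltn_ord i)).
set N : R := n%:R.
have N1 : 1 <= N by rewrite /N ler1n.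
set d := Q * g - N * C.
have NC0 : 0 <= N * C by rewrite mulr_ge0 // ler0n.
have d0 : 2%:R * N * C + 1 <= d by rewrite /d; lra.
have dpos : 0 < d by lra.
pose vk k := [arg max_(j > i) (P j k ^+ 2)]%O.
have Hvk : forall k j, P j k ^+ 2 <= P (vk k) k ^+ 2.
  by move=> k j; rewrite /vk; case: arg_maxP => // m _; apply.
have Hmass : forall k, 1 <= N * P (vk k) k ^+ 2.
  move=> k; rewrite -(@L_col1 _ _ P HP k).
  apply: le_trans (ler_sum _ (fun j _ => Hvk k j)) _.
  by rewrite sumr_const card_ord -mulr_natl.
pose u k := W (vk k).
have Hb := @L_bound _ _ _ _ _ _ _ _ HP He HC.
have Hnear : forall k, `|lam k + Q * u k| <= N * C.
  move=> k; apply: (@aux1 _ _ `|P (vk k) k|) => //.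
  - exact: Hb.
  - by rewrite real_normK ?num_real.
have Hfar : forall k j, W j != u k -> `|P j k| <= C / d.
  move=> k j Hj; have g1 := Hg _ _ Hj.
  have h1 : Q * g <= Q * `|W j - u k| by rewrite ler_wpM2l.
  have h2 : Q * `|W j - u k| <= `|lam k + Q * W j| + `|lam k + Q * u k|.
    rewrite -[Q in Q * _]ger0_norm // -normrM.
    have -> : Q * (W j - u k) = (lam k + Q * W j) - (lam k + Q * u k) by ring.
    exact: ler_normB.
  have h3 := Hnear k; have h4 := Hb k j.
  have h5 : d <= `|lam k + Q * W j| by rewrite /d; lra.
  rewrite ler_pdivlMr // mulrC; apply: le_trans h4.
  by rewrite ler_wpM2r.
have Hmon : forall k k' : 'I_n, (k <= k')%N -> u k' <= u k.
  move=> k k' kk; rewrite leNgt; apply/negP => lt.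
  have hne : W (vk k') != W (vk k) by rewrite gt_eqF.
  have := Hg _ _ hne; rewrite gtr0_norm ?subr_gt0 // => g1.
  have h1 : Q * g <= Q * (u k' - u k) by rewrite ler_wpM2l.
  have := Hnear k; have := Hnear k'; have := Hmono _ _ kk.
  rewrite !ler_norml mulrBr in h1 * => h2 /andP[h3 h4] /andP[h5 h6].
  have HQ' : 3%:R * N * C + 1 <= Q * g by [].
  clear -h1 h2 h3 h4 h5 h6 HQ' NC0; lra.
have Cd0 : 0 <= C / d by rewrite divr_ge0 // ltW.
have Hfar2 : forall k j, W j != u k -> P j k ^+ 2 <= (C / d) ^+ 2.
  move=> k j h; rewrite -real_normK ?num_real // ler_sqr ?nnegrE //; exact: Hfar.
have Heps : N * N * (C / d) ^+ 2 < 1.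
  have z1 : N * (C / d) < 1.
    rewrite mulrA ltr_pdivrMr // mul1r.
    clear -d0 NC0; lra.
  have z0 : 0 <= N * (C / d) by rewrite mulr_ge0 // ler0n.
  have -> : N * N * (C / d) ^+ 2 = (N * (C / d)) ^+ 2 by ring.
  move: z0 z1; set z := N * (C / d) => z0 z1.
  rewrite expr2; apply: (le_lt_trans (ler_wpM2l z0 (ltW z1))); by rewrite mulr1.
have e20 : 0 <= (C / d) ^+ 2 by rewrite sqr_ge0.
have Hcount : forall x, (\sum_(k | u k == x) 1)%N = (\sum_(j | W j == x) 1)%N.
  move=> x; apply: (@intcl R); rewrite !natr_sum.
  have EA : \sum_(k | u k == x) (1%:R : R) = \sum_k \sum_j (if u k == x then P j k ^+ 2 else 0).
    rewrite big_mkcond; apply: eq_bigr => k _; case: ifP => _.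
    - by rewrite (@L_col1 _ _ P HP k).
    - by rewrite big1.
  have EB : \sum_(j | W j == x) (1%:R : R) = \sum_k \sum_j (if W j == x then P j k ^+ 2 else 0).
    rewrite exchange_big big_mkcond; apply: eq_bigr => j _ /=; case: ifP => _.
    - by rewrite (@L_row1 _ _ P HP j).
    - by rewrite big1.
  rewrite EA EB -sumrB; apply: le_lt_trans Heps.
  apply: le_trans (ler_norm_sum _ _ _) _.
  apply: le_trans (_ : \sum_(k < n) \sum_(j < n) (C / d) ^+ 2 <= _); last first.
    have mN : forall y : R, y *+ n = N * y by move=> y; rewrite mulr_natl.
    by rewrite !sumr_const card_ord !mN mulrA.
  apply: ler_sum => k _; rewrite -sumrB.
  apply: le_trans (ler_norm_sum _ _ _) _; apply: ler_sum => j _.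
  case: (eqVneq (u k) x) => hu; case: (eqVneq (W j) x) => hw.
  - by rewrite subrr normr0.
  - rewrite subr0 ger0_norm ?sqr_ge0 //; apply: Hfar2; by rewrite hu.
  - rewrite sub0r normrN ger0_norm ?sqr_ge0 //; apply: Hfar2; by rewrite hw eq_sym.
  - by rewrite subrr normr0.
have Hperm : perm_eq [seq W j | j <- enum 'I_n] [seq u k | k <- enum 'I_n].
  apply/allP => x _; apply/eqP; rewrite !count_map -!sum1_count.
  have := Hcount x; rewrite /index_enum; unlock => /= ->.
  by [].
have Hsort : sorted (fun a b : R => b <= a) [seq u k | k <- enum 'I_n].
  apply: (@homo_sorted _ _ _ (fun a b : 'I_n => (a <= b)%N)).
    by move=> a b; exact: Hmon.
  by have := iota_sorted 0 n; rewrite -val_enum_ord sorted_map.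
have tot : total (fun a b : R => b <= a) by move=> a b; exact: le_total.
have tra : transitive (fun a b : R => b <= a) by move=> a b c h1 h2; exact: le_trans h2 h1.
have ant : antisymmetric (fun a b : R => b <= a).
  by move=> a b /andP[h1 h2]; apply: le_anti; rewrite h1 h2.
have Ew : wsorted W i = u i.
  rewrite /wsorted (perm_sortP tot tra ant _ _ Hperm) (sorted_sort tra Hsort).
  by rewrite (nth_map i) ?size_enum_ord // nth_ord_enum.
by apply: Hfar; rewrite -Ew.
Qed.

Theorem lemma1 (R : realType) (n : nat) (e : rel 'I_n) (W : 'I_n -> R)
  (lam : R -> 'I_n -> R) (psi : R -> 'M[R]_n) :
  simple_graph e -> connected_graph e ->
  (forall Q : R, ordered_orthonormal_eigenbasis (Hop e W Q) (lam Q) (psi Q)) ->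
  forall (i v : 'I_n), W v <> wsorted W i ->
    psi Q v i @[Q --> +oo] --> 0.
Proof.
move=> _ _ Hb i v /eqP Hv.
set D := sLaplacian R e.
set C := \sum_v \sum_j `|D v j|.
have C0 : 0 <= C by apply: sumr_ge0 => a _; apply: sumr_ge0 => b _.
have HC : forall a, \sum_j `|D a j| <= C.
  move=> a; rewrite /C [X in _ <= X](bigD1 a) //= lerDl.
  by apply: sumr_ge0 => a' _; apply: sumr_ge0 => b _.
set g := \big[Num.min/1]_(p : 'I_n * 'I_n | W p.1 != W p.2) `|W p.1 - W p.2|.
have g0 : 0 < g.
  rewrite /g; apply: (big_ind (fun x => 0 < x)) => //.
    by move=> x y x0 y0; rewrite lt_min x0 y0.
  by move=> p hp; rewrite normr_gt0 subr_eq0.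
have Hg : forall a b, W a != W b -> g <= `|W a - W b|.
  move=> a b hab; rewrite /g (bigD1 (a, b)) //= ge_min lexx //.
set N : R := n%:R.
apply/cvgrPdist_lt => eps eps0.
exists ((3%:R * N * C + 1 + C / eps) / g); split; first by rewrite num_real.
move=> Q hQ.
rewrite ltr_pdivrMr // in hQ.
have Ce : 0 <= C / eps by rewrite divr_ge0 // ltW.
have NC0 : 0 <= N * C by rewrite mulr_ge0 // ler0n.
have hQ' : 3%:R * N * C + 1 + C / eps < Q * g by [].
have Q0 : 0 <= Q.
  have : 0 < Q * g by lra.
  by rewrite pmulr_lgt0 // => /ltW.
have [HP He Hm] := Hb Q.
have Hmain := @main R n D W Q (lam Q) (psi Q) C g HP He Hm HC C0 Hg Q0.
have hQ3 : 3%:R * N * C + 1 <= Q * g by lra.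
have := Hmain hQ3 i v Hv.
rewrite sub0r normrN => h; apply: le_lt_trans h _.
have dpos : 0 < Q * g - N * C by lra.
rewrite ltr_pdivrMr // .
have : C / eps * eps = C by rewrite mulfVK // gt_eqF.
nra.
Qed.
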